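(* Let $\nu=\sum_{k=1}^K p^{(k)}\nu^{(k)}$ be a mixture model on $\mathbb{R}^d$ satisfying the standing assumptions below, and suppose there is $\beta\in\mathbb{R}$ with $\beta\,\mathbb{E}_{x\sim\nu}[|x_i-\mu_i(x)|]\ge\sqrt{\mathbb{E}_{x\sim\nu}[|x_i-\mu_i(x)|^2]}$ for all $i\in[d]$. Let $q=ENR(\nu)>0$. Then the MMDT algorithm (described below) returns a decision tree with $$P_{x\sim\nu}\big(\hat\mu(x)\ne\mu(x)\big)\le\frac{(4+2\pi^2/3)\,\alpha K(K-1)}{q}.$$
   Context: Standing assumptions: $\nu=\sum_{k=1}^K p^{(k)}\nu^{(k)}$, $\sum_k p^{(k)}=1$, each $\nu^{(k)}$ a discrete or absolutely continuous probability distribution on $\mathbb{R}^d$ with mean $\mu^{(k)}$ and density/mass function symmetric about $\mu^{(k)}$; all components share finite coordinate-wise variances $\sigma_1^2,\dots,\sigma_d^2>0$; $p^{(k)}\le\alpha/K$ for all $k$ with fixed $\alpha\ge1$. For $x\sim\nu$ drawn from component $k$, $\mu(x)=\mu^{(k)}$. $ENR(\nu)=\min_{k\ne l}\max_{j\in[d]}|\mu^{(k)}_j-\mu^{(l)}_j|^2/\sigma_j^2$. MMDT algorithm: start with a single root node whose index set is $N=[K]$. Repeatedly, for each node with index set $N$, $|N|\ge2$: choose the axis $i(N)\in\arg\max_{i\in[d]}\sigma_i^{-1}\max_{k,l\in N}|\mu^{(k)}_i-\mu^{(l)}_i|$; with $\nu(N)=\sum_{k\in N}\bar p^{(k)}\nu^{(k)}$,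 $\bar p^{(k)}=p^{(k)}/\sum_{m\in N}p^{(m)}$, choose a threshold $\theta$ with $\min_{k\in N}\mu^{(k)}_i<\theta<\max_{k\in N}\mu^{(k)}_i$ minimizing $P_{x\sim\nu(N)}(x \text{ and } \mu(x) \text{ lie on opposite sides of the cut } x_i\le\theta)$ (ties broken randomly; when the exact densities are unknown, instead minimize the Chebyshev upper bound $\sum_{k\in N}\bar p^{(k)}\sigma_i^2|\mu^{(k)}_i-\theta|^{-2}$); split the node by the cut $x_i\le\theta$ into two children with index sets $\{k\in N:\mu^{(k)}_i\le\theta\}$ and $\{k\in N:\mu^{(k)}_i>\theta\}$. Stop when every leaf has a single index. The resulting tree partitions $\mathbb{R}^d$ into $K$ leaves each containing exactly one mean; $\hat\mu(x)$ denotes the mean $\mu^{(k)}$ lying in the same leaf as $x$. *)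

(* Defs.v *)
From HB Require Import structures.
From mathcomp Require Import all_boot all_order all_algebra.
From mathcomp Require Import all_classical all_reals all_analysis.
Set Implicit Arguments. Unset Strict Implicit. Unset Printing Implicit Defensive.
Import Order.TTheory GRing.Theory Num.Theory.
Import numFieldNormedType.Exports.
Local Open Scope classical_set_scope.
Local Open Scope ring_scope.

(* Points of R^d are d-tuples of reals; [d.-tuple R] carries the product
   (Borel) sigma-algebra generated by the coordinate projections. *)

Section MMDT.
Context {R : realType} {K d : nat}.

Definition xcoord (j : 'I_d) (x : d.-tuple R) : R := tnth x j.

Definition box (a b : d.-tuple R) : set (d.-tuple R) :=
  [set x | forall j : 'I_d, tnth a j <= tnth x j <= tnth b j].

Definition lebesgue_null (A : set (d.-tuple R)) : Prop :=
  forall eps : R, 0 < eps ->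
  exists a b : nat -> d.-tuple R,
    (forall n (j : 'I_d), tnth (a n) j <= tnth (b n) j) /\
    A `<=` \bigcup_n box (a n) (b n) /\
    (forall N : nat, \sum_(n < N) \prod_(j < d) (tnth (b n) j - tnth (a n) j) <= eps).

Definition discrete_law (P : probability (d.-tuple R) R) : Prop :=
  exists S : set (d.-tuple R), countable S /\ measurable S /\ P S = 1%E.

Definition abs_continuous_law (P : probability (d.-tuple R) R) : Prop :=
  forall A : set (d.-tuple R), measurable A -> lebesgue_null A -> P A = 0%E.

Definition reflect_about (m x : d.-tuple R) : d.-tuple R :=
  [tuple 2 * tnth m j - tnth x j | j < d].

(** the law P is symmetric about m (its density / mass function f satisfies
    f(m + v) = f(m - v)), stated as invariance under reflection about m *)
Definition symmetric_about (P : probability (d.-tuple R) R) (m : d.-tuple R) : Prop :=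
  forall A : set (d.-tuple R), measurable A -> P (reflect_about m @^-1` A) = P A.

(** ENR(nu) = min_{k<>l} max_j |mu^k_j - mu^l_j|^2 / sigma_j^2,
    with the conventions min over an empty set = +oo (K <= 1). *)
Definition pair_sep (mu : 'I_K -> d.-tuple R) (sigma : 'I_d -> R) (k l : 'I_K) : R :=
  \big[Num.max/0]_(j < d) (`|tnth (mu k) j - tnth (mu l) j| ^+ 2 / sigma j ^+ 2).

Definition ENR (mu : 'I_K -> d.-tuple R) (sigma : 'I_d -> R) : \bar R :=
  \big[Order.min/+oo%E]_(k < K) \big[Order.min/+oo%E]_(l < K | l != k)
     (pair_sep mu sigma k l)%:E.

Inductive dtree : Type :=
| DLeaf of 'I_K
| DNode of 'I_d & R & dtree & dtree.  (* left child: x_i <= theta *)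

Fixpoint leaf_of (t : dtree) (x : d.-tuple R) : 'I_K :=
  match t with
  | DLeaf k => k
  | DNode i th tl tr => if tnth x i <= th then leaf_of tl x else leaf_of tr x
  end.

Variables (p : 'I_K -> R) (mu : 'I_K -> d.-tuple R) (sigma : 'I_d -> R)
          (nu : 'I_K -> probability (d.-tuple R) R).

Definition axis_score (N : {set 'I_K}) (i : 'I_d) : R :=
  (sigma i)^-1 * \big[Num.max/0]_(k in N) \big[Num.max/0]_(l in N)
                    `|tnth (mu k) i - tnth (mu l) i|.

Definition admissible_threshold (N : {set 'I_K}) (i : 'I_d) (th : R) : Prop :=
  (exists2 k, k \in N & tnth (mu k) i < th) /\
  (exists2 l, l \in N & th < tnth (mu l) i).

Definition pbar (N : {set 'I_K}) (k : 'I_K) : R := p k / \sum_(m in N) p m.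

Definition split_error (N : {set 'I_K}) (i : 'I_d) (th : R) : \bar R :=
  (\sum_(k in N) (pbar N k)%:E *
     nu k [set x | ((tnth x i <= th) != (tnth (mu k) i <= th))%R])%E.

Definition cheb_bound (N : {set 'I_K}) (i : 'I_d) (th : R) : \bar R :=
  (\sum_(k in N) (pbar N k)%:E *
     (if (tnth (mu k) i == th)%R then +oo
      else (sigma i ^+ 2 / `|tnth (mu k) i - th| ^+ 2)%:E))%E.

(** split criterion: exact misclassification (cheb = false) or its
    Chebyshev upper bound (cheb = true, densities unknown) *)
Definition split_crit (cheb : bool) (N : {set 'I_K}) (i : 'I_d) (th : R) : \bar R :=
  if cheb then cheb_bound N i th else split_error N i th.

(** [mmdt_run cheb N t]: t is a possible output (over all random tie-breaks)
    of the MMDT algorithm started on a node with index set N. *)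
Inductive mmdt_run (cheb : bool) : {set 'I_K} -> dtree -> Prop :=
| mmdt_leaf (k : 'I_K) : mmdt_run cheb [set k] (DLeaf k)
| mmdt_node (N : {set 'I_K}) (i : 'I_d) (th : R) (tl tr : dtree) :
    (1 < #|N|)%N ->
    (forall i' : 'I_d, axis_score N i' <= axis_score N i) ->
    admissible_threshold N i th ->
    (forall th' : R, admissible_threshold N i th' ->
       (split_crit cheb N i th <= split_crit cheb N i th')%E) ->
    mmdt_run cheb [set k in N | tnth (mu k) i <= th] tl ->
    mmdt_run cheb [set k in N | th < tnth (mu k) i] tr ->
    mmdt_run cheb N (DNode i th tl tr).

(** E_{x ~ nu}[ f_k(x) ] where k is the component x is drawn from *)
Definition mix_expect (f : 'I_K -> d.-tuple R -> R) : \bar R :=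
  (\sum_(k < K) (p k)%:E * 'E_(nu k)[f k])%E.

(** P_{x ~ nu}(E_k holds of x), k the component x is drawn from *)
Definition mix_prob (E : 'I_K -> set (d.-tuple R)) : \bar R :=
  (\sum_(k < K) (p k)%:E * nu k (E k))%E.

End MMDT.

(* Main.v *)
Require Import Defs.
From HB Require Import structures.
From mathcomp Require Import all_boot all_order all_algebra.
From mathcomp Require Import all_classical all_reals all_analysis.
From mathcomp Require Import ring lra zify.
Import Order.TTheory GRing.Theory Num.Theory.
Import numFieldNormedType.Exports.
Local Open Scope classical_set_scope.
Local Open Scope ring_scope.

Section G.
Variable R : realType.
Definition G (x : R) : R := if 1 <= x then - x^-1 else if -1 <= x then 4 * x - 5 else -10 - x^-1.

Lemma keyp (t : R) : 1/2 <= t <= 3/2 -> (t^+2)^-1 <= 7 - 4*t - (t + 1/2)^-1.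
Proof.
move=> /andP[h1 h2].
have t0 : 0 < t by lra.
have a0 : 0 < t + 1/2 by lra.
rewrite -subr_ge0.
have -> : 7 - 4*t - (t + 1/2)^-1 - (t^+2)^-1 =
   (t^+2 * (t + 1/2) * (7 - 4 * t) - t^+2 - (t + 1/2)) / (t^+2 * (t + 1/2)).
  by field; apply/andP; split; apply/eqP => ?; lra.
apply: divr_ge0; last by rewrite mulr_ge0 // ?ltW // exprn_gt0.
have -> : t ^+ 2 * (t + 1 / 2) * (7 - 4 * t) - t ^+ 2 - (t + 1 / 2) =
  (t - 1/2) * (1/4 + 4 * ((3/2 - t) * (t + 1/4) * (t + 1/2))) by field.
apply: mulr_ge0; first lra.
have : 0 <= (3/2 - t) * (t + 1/4) * (t + 1/2) by rewrite !mulr_ge0 //; lra.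
lra.
Qed.

Lemma invdiff (s : R) : 1/4 < s^+2 ->
  (s^+2)^-1 <= (s - 1/2)^-1 - (s + 1/2)^-1.
Proof.
move=> hs.
have e : (s - 1/2)^-1 - (s + 1/2)^-1 = (s^+2 - 1/4)^-1.
  have h1 : s - 1/2 != 0 by apply/eqP => h; nra.
  have h2 : s + 1/2 != 0 by apply/eqP => h; nra.
  have h3 : s^+2 - 1/4 != 0 by apply/eqP => h; lra.
  by field; repeat (apply/andP; split); apply/eqP => ?; nra.
rewrite e lef_pV2 ?posrE; lra.
Qed.

Lemma G_ge1 (x : R) : 1 <= x -> G x = - x^-1.
Proof. by rewrite /G => ->. Qed.
Lemma G_mid (x : R) : -1 <= x <= 1 -> G x = 4 * x - 5.
Proof.
move=> /andP[h1 h2]; rewrite /G h1; case: ifP => // h.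
have -> : x = 1 by apply/eqP; rewrite eq_le h2 h.
by rewrite invr1; lra.
Qed.
Lemma G_lem1 (x : R) : x <= -1 -> G x = -10 - x^-1.
Proof.
move=> h; rewrite /G; case: ifP => h1; first lra.
case: ifP => h2 //.
have -> : x = -1 by apply/eqP; rewrite eq_le h h2.
by rewrite invrN invr1; lra.
Qed.
Lemma inv_ge1 (x : R) : 1 <= x -> 0 < x^-1 <= 1.
Proof.
move=> h; have h0 : 0 < x by lra.
by rewrite invr_gt0 h0 /= invr_le1 ?unitfE ?gt_eqF.
Qed.
Lemma inv_lem1 (x : R) : x <= -1 -> -1 <= x^-1 < 0.
Proof.
move=> h; have := inv_ge1 (-x); rewrite invrN => H.
have := H ltac:(lra); lra.
Qed.

Lemma G_bnd (x : R) : -10 <= G x <= 0.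
Proof.
have [h|h] := lerP 1 x; first by rewrite G_ge1 //; have := inv_ge1 _ h; lra.
have [h'|h'] := lerP (-1) x.
  by rewrite G_mid; [lra| apply/andP; split; lra].
rewrite G_lem1; last lra.
have := inv_lem1 x ltac:(lra); lra.
Qed.

Lemma G_mono (x y : R) : x <= y -> G x <= G y.
Proof.
move=> xy.
have [hy|hy] := lerP 1 y.
  rewrite (G_ge1 _ hy).
  have [hx|hx] := lerP 1 x.
    rewrite (G_ge1 _ hx) lerN2 lef_pV2 ?posrE //; lra.
  have := inv_ge1 _ hy => hh.
  have := G_bnd x; have [hx'|hx'] := lerP (-1) x.
    by rewrite G_mid; [lra| apply/andP; split; lra].
  rewrite G_lem1; last lra. have := inv_lem1 x ltac:(lra); lra.
have [hy'|hy'] := lerP (-1) y.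
  rewrite (@G_mid y); last by apply/andP; split; lra.
  have [hx'|hx'] := lerP (-1) x.
    by rewrite G_mid; [lra| apply/andP; split; lra].
  rewrite G_lem1; last lra. have := inv_lem1 x ltac:(lra); lra.
rewrite G_lem1; last lra. rewrite G_lem1; last lra.
rewrite lerD2l lerN2 ler_nV2 //; rewrite inE ?unitfE; apply/andP; split;
  rewrite ?lt_eqF //; lra.
Qed.

Lemma G_step (s : R) : 1/2 <= `|s| -> (s^+2)^-1 <= G (s + 1/2) - G (s - 1/2).
Proof.
have [s0|s0] := lerP 0 s.
  rewrite ger0_norm // => hs.
  rewrite G_ge1; last lra.
  have [h|h] := lerP (3/2) s.
    rewrite G_ge1; last lra.
    have := invdiff s ltac:(nra); lra.
  rewrite G_mid; last by apply/andP; split; lra.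
  have := keyp s ltac:(apply/andP; split; lra); lra.
rewrite ltr0_norm // => hs.
rewrite (@G_lem1 (s - 1/2)); last lra.
have [h|h] := lerP s (-(3/2)).
  rewrite G_lem1; last lra.
  have := invdiff s ltac:(nra); lra.
rewrite G_mid; last by apply/andP; split; lra.
have := keyp (- s) ltac:(apply/andP; split; lra).
rewrite sqrrN (_ : - s + 1/2 = - (s - 1/2)); last by field.
rewrite invrN; lra.
Qed.

Lemma perpoint (m : nat) (u : R) (E : {set 'I_m}) :
  (forall j : 'I_m, j \in E -> 1/2 <= `|j%:R + 1/2 - u|) ->
  \sum_(j in E) ((j%:R + 1/2 - u)^+2)^-1 <= 10.
Proof.
move=> hE.
apply: (@le_trans _ _ (\sum_(j < m) (G (j.+1%:R - u) - G (j%:R - u)))).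
  rewrite big_mkcond /=; apply: ler_sum => j _; case: ifP => jE.
    have := G_step _ (hE j jE).
    have -> : j%:R + 1/2 - u + 1/2 = j.+1%:R - u :> R by rewrite -addn1 natrD; field.
    by have -> : j%:R + 1/2 - u - 1/2 = j%:R - u :> R by field.
  by rewrite subr_ge0; apply: G_mono; rewrite lerD2r ler_nat.
rewrite -(big_mkord xpredT (fun j => G (j.+1%:R - u) - G (j%:R - u))).
rewrite (telescope_sumr (fun j => G (j%:R - u))) //.
by have := G_bnd (m%:R - u); have := G_bnd (0%:R - u); lra.
Qed.

Lemma oneD (I : finType) (N : {set I}) (z : I -> R) (k1 k2 : I) :
  k1 \in N -> k2 \in N -> (forall k, k \in N -> z k1 <= z k <= z k2) ->
  z k1 < z k2 ->
  exists th, [/\ z k1 < th < z k2, (forall k, k \in N -> z k != th) &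
   \sum_(k in N) ((z k - th)^+2)^-1 <= 40 * (#|N|%:R - 1)^+2 / (z k2 - z k1)^+2].
Proof.
move=> k1N k2N hb hlt.
set n := #|N|.
have k12 : k1 != k2 by apply/eqP => e; rewrite e ltxx in hlt.
have cN1 : #|N :\ k1| = n.-1 by rewrite /n (cardsD1 k1 N) k1N.
have cN2 : #|N :\ k1 :\ k2| = n.-2.
  have := cardsD1 k2 (N :\ k1); rewrite !inE eq_sym k12 k2N cN1 /=; lia.
have n2 : (2 <= n)%N.
  have : (0 < #|N :\ k1|)%N by apply/card_gt0P; exists k2; rewrite !inE eq_sym k12.
  rewrite cN1; have : (0 < n)%N by apply/card_gt0P; exists k1. lia.
set m := (2 * n.-1)%N.
have m0 : (0 < m)%N by rewrite /m; lia.
have mR : m%:R = 2 * (n%:R - 1) :> R.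
  by rewrite /m natrM -subn1 natrB //; lia.
have m0R : 0 < m%:R :> R by rewrite ltr0n.
set D := z k2 - z k1. have D0 : 0 < D by rewrite subr_gt0.
set h := D / m%:R. have h0 : 0 < h by rewrite divr_gt0.
have Dh : D = m%:R * h by rewrite /h; field; rewrite gt_eqF.
set c := fun j : 'I_m => z k1 + j%:R * h + h / 2.
set E := [set j : 'I_m | [forall k in N, h/2 <= `|z k - c j|]]%SET.
have cardE : (n <= #|E|)%N.
  set NE := ~: E.
  pose w j := odflt k1 [pick k in N | `|z k - c j| < h/2].
  have wP : forall j, j \in NE -> w j \in N /\ `|z (w j) - c j| < h/2.
    move=> j; rewrite !inE => /forall_inPn [k kN hk].
    rewrite /w; case: pickP => [k' /andP[k'N hk']|]; first by split.
    by move/(_ k); rewrite kN /= ltNge hk.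
  have wD : forall j, j \in NE -> w j \in N :\ k1 :\ k2.
    move=> j jN; have [wN wl] := wP j jN.
    rewrite !inE wN andbT; apply/andP; split; apply/eqP => e; move: wl; rewrite e.
      move=> /ltr_normlP [_ hl].
      have hh : j%:R * h + h <= m%:R * h.
        by rewrite -[X in _ + X]mul1r -mulrDl ler_pM2r // natr1 ler_nat ltn_ord.
      move: hl; rewrite /c; rewrite /D in Dh; lra.
    move=> /ltr_normlP [hl _].
    have : 0 <= j%:R * h by rewrite mulr_ge0 // ltW.
    move: hl; rewrite /c; lra.
  have winj : {in NE &, injective w}.
    move=> j j' jN j'N e; have [_ h1] := wP j jN; have [_ h2] := wP j' j'N.
    move: h1 h2; rewrite e => /ltr_normlP [h1 h1'] /ltr_normlP [h2 h2'].
    apply: val_inj => /=; case: (ltngtP j j') => // jlt; exfalso.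
      have hh : j%:R * h + h <= j'%:R * h.
        by rewrite -[X in _ + X]mul1r -mulrDl ler_pM2r // natr1 ler_nat.
      by move: h1 h1' h2 h2'; rewrite /c; lra.
    have hh : j'%:R * h + h <= j%:R * h.
      by rewrite -[X in _ + X]mul1r -mulrDl ler_pM2r // natr1 ler_nat.
    by move: h1 h1' h2 h2'; rewrite /c; lra.
  have cNE : (#|NE| <= n.-2)%N.
    rewrite -cN2 -(card_in_imset winj); apply: subset_leq_card.
    by apply/fintype.subsetP => x /imsetP [j jN ->]; exact: wD.
  have := cardsC E; rewrite card_ord -/NE; lia.
have pp : forall k, k \in N -> \sum_(j in E) ((z k - c j)^+2)^-1 <= 10 / h^+2.
  move=> k kN; set u := (z k - z k1) / h.
  have heq : forall j : 'I_m, z k - c j = - h * (j%:R + 1/2 - u).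
    by move=> j; rewrite /c /u; field; rewrite gt_eqF.
  rewrite (eq_bigr (fun j : 'I_m => (h^+2)^-1 * ((j%:R + 1/2 - u)^+2)^-1)); last first.
    by move=> j _; rewrite heq mulNr sqrrN exprMn invfM.
  rewrite -mulr_sumr mulrC ler_pM2r ?invr_gt0 ?exprn_gt0 //.
  apply: perpoint => j; rewrite inE => /forall_inP /(_ k kN).
  rewrite heq normrM normrN (gtr0_norm h0) => H.
  by rewrite -(ler_pM2l h0); lra.
set f := fun j => \sum_(k in N) ((z k - c j)^+2)^-1.
have tot : \sum_(j in E) f j <= n%:R * (10 / h^+2).
  rewrite /f exchange_big /=.
  apply: le_trans; first by apply: ler_sum => k kN; exact: pp k kN.
  by rewrite sumr_const -[leLHS]mulr_natl.
have /card_gt0P [j0 j0E] : (0 < #|E|)%N by lia.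
set js := [arg min_(j < j0 in E) f j]%O.
have [jsE jsmin] : js \in E /\ forall j, j \in E -> f js <= f j.
  by rewrite /js; case: arg_minP => // j jE H; split => // ? /H.
have fs0 : 0 <= f js by apply: sumr_ge0 => k _; rewrite invr_ge0 sqr_ge0.
have fsb : f js <= 10 / h^+2.
  have : #|E|%:R * f js <= n%:R * (10 / h^+2).
    apply: le_trans tot; rewrite mulr_natl -sumr_const.
    by apply: ler_sum => j /jsmin.
  have nE : n%:R <= #|E|%:R :> R by rewrite ler_nat.
  have n0 : 0 < n%:R :> R by rewrite ltr0n; lia.
  move=> H; rewrite -(ler_pM2l n0); apply: le_trans H.
  by apply: ler_wpM2r.
exists (c js); split.
- have hh : js%:R * h + h <= m%:R * h.
    by rewrite -[X in _ + X]mul1r -mulrDl ler_pM2r // natr1 ler_nat ltn_ord.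
  have : 0 <= js%:R * h by rewrite mulr_ge0 // ltW.
  rewrite /c => ?; apply/andP; split; rewrite /D in Dh; lra.
- move=> k kN; move: jsE; rewrite inE => /forall_inP /(_ k kN) H.
  by apply/eqP => e; move: H; rewrite e subrr normr0; lra.
- have n1 : n%:R - 1 != 0 :> R.
    by rewrite subr_eq0 pnatr_eq1; apply/eqP => e; rewrite e in n2.
  apply: le_trans fsb _; rewrite le_eqVlt; apply/orP; left; apply/eqP.
  by rewrite /h mR; field; rewrite n1 gt_eqF.
Qed.
End G.

Section Prob.
Variables (R : realType) (d : nat).

Lemma mtnth (i : 'I_d) : measurable_fun [set: d.-tuple R] (@xcoord R d i).
Proof. exact: measurable_tnth. Qed.

HB.instance Definition _ (i : 'I_d) :=
  isMeasurableFun.Build _ _ _ _ (@xcoord R d i) (mtnth i).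

Lemma mpre (i : 'I_d) (B : set R) : measurable B ->
  measurable [set x : d.-tuple R | B (tnth x i)].
Proof. by move=> mB; have := mtnth i measurableT B mB; rewrite setTI. Qed.

Lemma mge (i : 'I_d) (a : R) : measurable [set x : d.-tuple R | a <= tnth x i].
Proof.
rewrite (_ : [set x | _] = [set x : d.-tuple R | [set` `[a, +oo[%R] (tnth x i)]); last first.
  by apply/seteqP; split => x /=; rewrite in_itv /= andbT.
by apply: mpre; apply: measurable_itv.
Qed.
Lemma mgt (i : 'I_d) (a : R) : measurable [set x : d.-tuple R | a < tnth x i].
Proof.
rewrite (_ : [set x | _] = [set x : d.-tuple R | [set` `]a, +oo[%R] (tnth x i)]); last first.
  by apply/seteqP; split => x /=; rewrite in_itv /= andbT.
by apply: mpre; apply: measurable_itv.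
Qed.
Lemma mle (i : 'I_d) (a : R) : measurable [set x : d.-tuple R | tnth x i <= a].
Proof.
rewrite (_ : [set x | _] = [set x : d.-tuple R | [set` `]-oo, a]%R] (tnth x i)]); last first.
  by apply/seteqP; split => x /=; rewrite in_itv /=.
by apply: mpre; apply: measurable_itv.
Qed.



Lemma sym_cheb (P : probability (d.-tuple R) R) (m : d.-tuple R) (i : 'I_d) (s t : R) :
  symmetric_about P m -> ('E_P[xcoord i] = (tnth m i)%:E)%E ->
  variance P (xcoord i) = (s^+2)%:E -> 0 < t ->
  (P [set x | (tnth m i + t <= tnth x i)%R] <= (s^+2 / (2 * t^+2))%:E)%E /\
  (P [set x | (tnth x i <= tnth m i - t)%R] <= (s^+2 / (2 * t^+2))%:E)%E.
Proof.
move=> hs hE hV t0.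
set A := [set x | tnth m i + t <= tnth x i].
set B := [set x | tnth x i <= tnth m i - t].
have mA : measurable A by apply: mge.
have mB : measurable B by apply: mle.
have PAB : P B = P A.
  rewrite -(hs A mA); congr (P _); apply/seteqP; split => x;
  rewrite /A /B /preimage /= /reflect_about tnth_mktuple; lra.
have hC : (P [set x | (t <= `|xcoord i x - fine 'E_P[xcoord i]|)%R] <= (t ^- 2)%:E * variance P (xcoord i))%E.
  exact: (chebyshev (xcoord i) t0).
rewrite hE hV /= in hC.
have eU : [set x | (t <= `|xcoord i x - tnth m i|)%R] = A `|` B.
  clear hC PAB hE hV; apply/seteqP; split => x; rewrite /A /B /xcoord /=.
    case: (lerP 0 (tnth x i - tnth m i)) => h.
      by rewrite ger0_norm // => ?; left; lra.
    by rewrite ltr0_norm // => ?; right; lra.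
  by move=> [] ?; [rewrite ger0_norm|rewrite ltr0_norm]; lra.
have dAB : A `&` B = set0.
  by clear hC PAB hE hV; apply/seteqP; split => x //; rewrite /A /B /= => -[? ?]; exfalso; lra.
have hU : P (A `|` B) = (P A + P A)%E.
  by rewrite measureU //; congr (_ + _)%E; exact: PAB.
rewrite eU hU in hC.
have fA : P A \is a fin_num by apply: fin_num_measure.
rewrite -(fineK fA) in hC *.
rewrite -EFinD -EFinM lee_fin in hC.
rewrite lee_fin.
have h2 : fine (P A) <= s^+2 / (2 * t^+2).
  rewrite ler_pdivlMr ?mulr_gt0 ?exprn_gt0 //.
  have e : t ^- 2 * s ^+ 2 * t^+2 = s^+2 by field; rewrite gt_eqF.
  have H := ler_wpM2r (ltW (exprn_gt0 2 t0)) hC; rewrite e in H.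
  clear -H; nra.
by split; [|rewrite PAB -(fineK fA) lee_fin].
Qed.

Lemma miss_bound (P : probability (d.-tuple R) R) (m : d.-tuple R) (i : 'I_d) (s th : R) :
  symmetric_about P m -> ('E_P[xcoord i] = (tnth m i)%:E)%E ->
  variance P (xcoord i) = (s^+2)%:E -> tnth m i != th ->
  (P [set x | ((tnth x i <= th) != (tnth m i <= th))%R] <=
     (s^+2 / (2 * (tnth m i - th)^+2))%:E)%E.
Proof.
move=> hs hE hV hne.
case: (ltgtP (tnth m i) th) hne => // hlt _.
- have t0 : 0 < th - tnth m i by rewrite subr_gt0.
  have [hA _] := sym_cheb _ _ _ _ _ hs hE hV t0.
  rewrite (_ : (tnth m i - th)^+2 = (th - tnth m i)^+2); last by rewrite -sqrrN opprB.
  apply: le_trans hA; apply: le_measure; rewrite ?inE.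
  + rewrite (_ : [set x | _] = [set x : d.-tuple R | th < tnth x i]); first exact: mgt.
    by apply/seteqP; split => x /=; rewrite ?(ltW hlt); case: (lerP (tnth x i) th).
  + exact: mge.
  + move=> x /=; rewrite ?(ltW hlt); case: (lerP (tnth x i) th) => h //= _.
    by rewrite (_ : tnth m i + (th - tnth m i) = th) ?ltW //; ring.
- have t0 : 0 < tnth m i - th by rewrite subr_gt0.
  have [_ hB] := sym_cheb _ _ _ _ _ hs hE hV t0.
  have hf : (tnth m i <= th) = false by rewrite leNgt hlt.
  apply: le_trans hB; apply: le_measure; rewrite ?inE.
  + rewrite (_ : [set x | _] = [set x : d.-tuple R | tnth x i <= th]); first exact: mle.
    by apply/seteqP; split => x /=; rewrite ?hf; case: (lerP (tnth x i) th).
  + exact: mle.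
  + move=> x /=; rewrite ?hf; case: (lerP (tnth x i) th) => h //= _.
    by rewrite (_ : tnth m i - (tnth m i - th) = th) //; ring.
Qed.
End Prob.

Section Main.
Variables (R : realType) (K d : nat) (p : 'I_K -> R) (mu : 'I_K -> d.-tuple R)
  (sigma : 'I_d -> R) (nu : 'I_K -> probability (d.-tuple R) R) (alpha q : R).
Hypotheses (hp0 : forall k, 0 <= p k) (hpa : forall k, p k <= alpha / K%:R)
  (hsym : forall k, symmetric_about (nu k) (mu k)) (hsig : forall j, 0 < sigma j)
  (hmean : forall k j, ('E_(nu k)[xcoord j] = (tnth (mu k) j)%:E)%E)
  (hvar : forall k j, variance (nu k) (xcoord j) = (sigma j ^+ 2)%:E)
  (hq : ENR mu sigma = q%:E) (hq0 : 0 < q).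

Lemma pbar_ge0 N k : 0 <= pbar p N k.
Proof. by rewrite /pbar divr_ge0 // sumr_ge0. Qed.

Lemma split_cheb N i th :
  (split_error p mu nu N i th <= (2^-1)%:E * cheb_bound p mu sigma N i th)%E.
Proof.
rewrite /split_error /cheb_bound ge0_sume_distrr; last first.
  move=> k _; apply: mule_ge0; first by rewrite lee_fin pbar_ge0.
  by case: ifP => _; rewrite ?leey // lee_fin divr_ge0 // sqr_ge0.
apply: lee_sum => k kN.
have pb0 := pbar_ge0 N k.
case: eqP => e.
  have [->|pbpos] := eqVneq (pbar p N k) 0; first by rewrite !mul0e mule0.
  rewrite gt0_muley ?lte_fin ?lt_def ?pbpos // gt0_muley ?leey // lte_fin invr_gt0 //.
have hne : tnth (mu k) i != th by apply/eqP.
have hb := miss_bound _ _ _ _ _ _ _ (hsym k) (hmean k i) (hvar k i) hne.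
apply: le_trans (lee_wpmul2l _ hb) _; first by rewrite lee_fin.
rewrite -!EFinM lee_fin real_normK ?num_real //.
have -> : pbar p N k * (sigma i ^+ 2 / (2 * (tnth (mu k) i - th) ^+ 2)) =
  2^-1 * (pbar p N k * (sigma i ^+ 2 / (tnth (mu k) i - th) ^+ 2)).
  by rewrite invfM; ring.
by [].
Qed.

Lemma mleaf (t : @dtree R K d) (P : 'I_K -> bool) :
  measurable [set x : d.-tuple R | P (leaf_of t x)].
Proof.
elim: t => [k|i th tl IHl tr IHr] /=.
  case: (P k).
    by rewrite (_ : [set _ | true] = setT) //; apply/seteqP; split => x.
  by rewrite (_ : [set _ | false] = set0) //; apply/seteqP; split => x.
rewrite (_ : [set x | _] = ([set x : d.-tuple R | tnth x i <= th] `&` [set x | P (leaf_of tl x)]) `|`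
  (~` [set x : d.-tuple R | tnth x i <= th] `&` [set x | P (leaf_of tr x)])).
  by apply: measurableU; apply: measurableI => //; [exact: mle| apply: measurableC; exact: mle].
apply/seteqP; split => x /=.
  by case: ifP => h; [left|right].
by case: ifP => h [] [].
Qed.

Lemma node_bound (cheb : bool) (N : {set 'I_K}) (i : 'I_d) (th : R) :
  (1 < #|N|)%N ->
  (forall i', axis_score mu sigma N i' <= axis_score mu sigma N i) ->
  admissible_threshold mu N i th ->
  (forall th', admissible_threshold mu N i th' ->
     (split_crit p mu sigma nu cheb N i th <= split_crit p mu sigma nu cheb N i th')%E) ->
  (\sum_(k in N) (p k)%:E * nu k [set x | ((tnth x i <= th) != (tnth (mu k) i <= th))%R]
     <= (alpha / K%:R / q * (20 * (#|N|%:R - 1)^+2))%:E)%E.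
Proof.
move=> N1 hax adm hmin.
set z := fun k => tnth (mu k) i.
have /card_gt1P [k0 [l0 [k0N l0N kl0]]] := N1.
have K0 : K%:R != 0 :> R by rewrite pnatr_eq0 -lt0n (leq_ltn_trans (leq0n k0) (ltn_ord k0)).
set kmin := [arg min_(k < k0 in N) z k]%O.
set kmax := [arg max_(k > k0 in N) z k]%O.
have [kminN hmin'] : kmin \in N /\ forall k, k \in N -> z kmin <= z k.
  by rewrite /kmin; case: arg_minP => // j jN H; split => // ? /H.
have [kmaxN hmax'] : kmax \in N /\ forall k, k \in N -> z k <= z kmax.
  by rewrite /kmax; case: arg_maxP => // j jN H; split => // ? /H.
set D := z kmax - z kmin.
have hpq : q <= pair_sep mu sigma k0 l0.
  suff : (q%:E <= (pair_sep mu sigma k0 l0)%:E)%E by rewrite lee_fin.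
  rewrite -hq /ENR; apply: le_trans (bigmin_le _ k0 _) _.
  by apply: bigmin_le_cond; rewrite eq_sym.
have [j hj] : exists j, q <= `|tnth (mu k0) j - tnth (mu l0) j| ^+ 2 / sigma j ^+ 2.
  case: (pselect (exists j, q <= `|tnth (mu k0) j - tnth (mu l0) j| ^+ 2 / sigma j ^+ 2)) => // H.
  exfalso.
  have : pair_sep mu sigma k0 l0 < q.
    rewrite /pair_sep; apply: bigmax_lt => // j' _; rewrite ltNge; apply/negP => hh.
    by apply: H; exists j'.
  by rewrite ltNge hpq.
have hj2 : `|tnth (mu k0) j - tnth (mu l0) j| / sigma j <= axis_score mu sigma N j.
  rewrite /axis_score [leRHS]mulrC ler_pM2r ?invr_gt0 //.
  apply: le_trans (le_bigmax_cond 0 (P := fun l => l \in N) (fun l => `|tnth (mu k0) j - tnth (mu l) j|) l0N) _.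
  exact: (le_bigmax_cond 0 (P := fun l => l \in N) (fun k => \big[Num.max/0]_(l in N) `|tnth (mu k) j - tnth (mu l) j|) k0N).
have hiD : axis_score mu sigma N i <= D / sigma i.
  rewrite /axis_score [leLHS]mulrC ler_pM2r ?invr_gt0 //.
  apply: bigmax_le => [|k kN]; first by have := hmin' _ kmaxN; rewrite /D; lra.
  apply: bigmax_le => [|l lN]; first by have := hmin' _ kmaxN; rewrite /D; lra.
  have := hmin' k kN; have := hmax' k kN; have := hmin' l lN; have := hmax' l lN.
  rewrite /D /z => *; rewrite ler_norml; apply/andP; split; lra.
set a := `|tnth (mu k0) j - tnth (mu l0) j| / sigma j.
have a0 : 0 <= a by rewrite /a divr_ge0 // ltW.
have hqa : q <= a ^+ 2 by rewrite /a expr_div_n.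
have aD : a <= D / sigma i := le_trans hj2 (le_trans (hax j) hiD).
have si0 := hsig i.
have qD : q * sigma i ^+ 2 <= D ^+ 2.
  set b := D / sigma i in aD.
  have -> : D = b * sigma i by rewrite /b; field; rewrite gt_eqF.
  rewrite exprMn ler_wpM2r ?sqr_ge0 //.
  apply: le_trans hqa _; rewrite ler_sqr ?nnegrE //; lra.
have D0 : 0 < D.
  have : 0 < D ^+ 2 by apply: lt_le_trans qD; rewrite mulr_gt0 // exprn_gt0.
  have : 0 <= D by have := hmin' _ kmaxN; rewrite /D; lra.
  rewrite le_eqVlt => /orP [/eqP <-|//]; by rewrite expr0n ltxx.
have hb : forall k, k \in N -> z kmin <= z k <= z kmax.
  by move=> k kN; rewrite hmin' ?hmax'.
have hlt : z kmin < z kmax by rewrite -subr_gt0.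
have [th' [hth' hne' hsum]] := @oneD R _ N z kmin kmax kminN kmaxN hb hlt.
have adm' : admissible_threshold mu N i th'.
  by move/andP: hth' => [h1 h2]; split; [exists kmin | exists kmax].
have hse : (split_error p mu nu N i th <= (2^-1)%:E * cheb_bound p mu sigma N i th')%E.
  have := hmin th' adm'; clear hmin; case: cheb => /= h.
    apply: le_trans (split_cheb _ _ _) _.
    by apply: lee_wpmul2l => //; rewrite lee_fin invr_ge0.
  exact: le_trans h (split_cheb _ _ _).
have hcv : cheb_bound p mu sigma N i th' =
    (\sum_(k in N) pbar p N k * (sigma i ^+ 2 / (z k - th')^+2))%:E.
  rewrite /cheb_bound -sumEFin; apply: eq_bigr => k kN.
  by rewrite (negbTE (hne' k kN)) -EFinM real_normK ?num_real.
set PN := \sum_(m in N) p m.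
have PN0 : 0 <= PN by rewrite sumr_ge0.
have aK0 : 0 <= alpha / K%:R by exact: le_trans (hp0 k0) (hpa k0).
have rhs0 : 0 <= alpha / K%:R / q * (20 * (#|N|%:R - 1)^+2).
  by apply: mulr_ge0; [apply: divr_ge0 => //; exact: ltW | apply: mulr_ge0 => //; exact: sqr_ge0].
have [PNe|PNn] := eqVneq PN 0.
  rewrite big1 ?lee_fin // => k kN.
  by rewrite (psumr_eq0P (fun k _ => hp0 k) PNe kN) mul0e.
have eqL : (\sum_(k in N) (p k)%:E * nu k [set x | ((tnth x i <= th) != (tnth (mu k) i <= th))%R]
    = PN%:E * split_error p mu nu N i th)%E.
  rewrite /split_error ge0_sume_distrr; last first.
    by move=> k _; apply: mule_ge0 => //; rewrite lee_fin pbar_ge0.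
  apply: eq_bigr => k _; rewrite muleA -EFinM; congr (_%:E * _)%E.
  by rewrite /pbar -/PN; field.
rewrite eqL; apply: le_trans (lee_wpmul2l _ hse) _; first by rewrite lee_fin.
rewrite hcv -!EFinM lee_fin.
set c := fun k => sigma i ^+ 2 / (z k - th') ^+ 2.
have S1 : PN * (\sum_(k in N) pbar p N k * c k) = \sum_(k in N) p k * c k.
  rewrite mulr_sumr; apply: eq_bigr => k _; rewrite mulrA /pbar -/PN; congr (_ * _).
  by field.
have S2 : \sum_(k in N) p k * c k <=
    alpha / K%:R * sigma i ^+ 2 * \sum_(k in N) ((z k - th')^+2)^-1.
  rewrite mulr_sumr; apply: ler_sum => k _; rewrite /c mulrA ler_wpM2r ?invr_ge0 ?sqr_ge0 //.
  by rewrite ler_wpM2r ?sqr_ge0.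
have S3 := ler_wpM2l (mulr_ge0 aK0 (sqr_ge0 (sigma i))) hsum.
have sD : sigma i ^+ 2 / D ^+ 2 <= q^-1.
  rewrite ler_pdivrMr ?exprn_gt0 // mulrC ler_pdivlMr //.
  by rewrite mulrC.
have e1 : PN * (2^-1 * \sum_(k in N) pbar p N k * c k) = 2^-1 * (PN * (\sum_(k in N) pbar p N k * c k)).
  by rewrite mulrCA.
rewrite e1 S1.
apply: le_trans (ler_wpM2l _ (le_trans S2 S3)) _; first by rewrite invr_ge0.
have e2 : 2^-1 * (alpha / K%:R * sigma i ^+ 2 * (40 * (#|N|%:R - 1) ^+ 2 / (z kmax - z kmin) ^+ 2))
   = (alpha / K%:R * 20 * (#|N|%:R - 1) ^+ 2) * (sigma i ^+ 2 / D ^+ 2).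
  by rewrite /D; field; rewrite -/D gt_eqF // K0.
rewrite e2.
have -> : alpha / K%:R / q * (20 * (#|N|%:R - 1) ^+ 2) = (alpha / K%:R * 20 * (#|N|%:R - 1) ^+ 2) * q^-1.
  by field; rewrite gt_eqF // K0.
by apply: ler_wpM2l => //; apply: mulr_ge0; [apply: mulr_ge0 => //| exact: sqr_ge0].
Qed.

Lemma arith (a b C F : R) : 1 <= a -> 1 <= b -> 20/3 <= C -> 0 <= F ->
  F * (20 * (a + b - 1)^+2) + (F * (C * (a^+2 * (a - 1))) + F * (C * (b^+2 * (b - 1))))
  <= F * (C * ((a + b)^+2 * (a + b - 1))).
Proof.
move=> a1 b1 hC hF; rewrite -!mulrDr; apply: ler_wpM2l => //.
have h1 : a + b - 1 <= a * b by nra.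
have h2 : 0 <= 3*a + 3*b - 2 by lra.
have h3 : 20/3 * ((a + b - 1) * (3*a + 3*b - 2)) <= C * (a * b * (3*a + 3*b - 2)).
  apply: ler_pM; [lra | apply: mulr_ge0; lra | lra | ].
  by apply: ler_wpM2r.
have h4 : 20 * (a + b - 1)^+2 <= 20/3 * ((a + b - 1) * (3*a + 3*b - 2)) by nra.
have e : C * ((a + b)^+2 * (a + b - 1)) =
  C * (a^+2 * (a - 1)) + C * (b^+2 * (b - 1)) + C * (a * b * (3*a + 3*b - 2)) by ring.
rewrite e; lra.
Qed.

Lemma mmiss (i : 'I_d) (th : R) (b : bool) :
  measurable [set x : d.-tuple R | ((tnth x i <= th) != b)%R].
Proof.
case: b.
  rewrite (_ : [set x | _] = [set x : d.-tuple R | th < tnth x i]); first exact: mgt.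
  by apply/seteqP; split => x /=; case: (lerP (tnth x i) th).
rewrite (_ : [set x | _] = [set x : d.-tuple R | tnth x i <= th]); first exact: mle.
by apply/seteqP; split => x /=; case: (lerP (tnth x i) th).
Qed.

Lemma tree_bound (C : R) (cheb : bool) (N : {set 'I_K}) (t : @dtree R K d) :
  20/3 <= C -> 0 <= alpha / K%:R / q ->
  mmdt_run p mu sigma nu cheb N t ->
  (\sum_(k in N) (p k)%:E * nu k [set x | leaf_of t x != k]
    <= (alpha / K%:R / q * (C * (#|N|%:R ^+ 2 * (#|N|%:R - 1))))%:E)%E.
Proof.
move=> hC hF; elim => [k | {}N i th tl tr N1 hax adm hmin _ IHl _ IHr].
  rewrite big_set1 (_ : [set x | leaf_of (DLeaf k) x != k] = set0); last first.
    by apply/seteqP; split => x //=; rewrite eqxx.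
  by rewrite measure0 mule0 cards1 subrr !mulr0.
set z := fun k => tnth (mu k) i.
set miss := fun k => [set x : d.-tuple R | ((tnth x i <= th) != (tnth (mu k) i <= th))%R].
set S := fun k => if tnth (mu k) i <= th then [set x : d.-tuple R | leaf_of tl x != k]
                  else [set x | leaf_of tr x != k].
have mS : forall k, measurable (S k).
  by move=> k; rewrite /S; case: ifP => _; exact: (mleaf _ (fun l => l != k)).
have step : forall k, k \in N ->
  ((p k)%:E * nu k [set x | leaf_of (DNode i th tl tr) x != k] <=
   (p k)%:E * nu k (miss k) + (p k)%:E * nu k (S k))%E.
  move=> k _; rewrite -ge0_muleDr //; apply: lee_wpmul2l; first by rewrite lee_fin.
  apply: le_trans (measureU2 _ (mmiss i th _) (mS k)).
  apply: le_measure; rewrite ?inE.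
  - exact: (mleaf _ (fun l => l != k)).
  - exact: measurableU (mmiss i th _) (mS k).
  move=> x /=; case: (boolP ((tnth x i <= th) != (tnth (mu k) i <= th))) => h; first by left.
  right; move: h; rewrite negbK => /eqP e; rewrite /S -e.
  by move: H; case: ifP.
apply: le_trans; first by apply: lee_sum => k kN; exact: step k kN.
rewrite big_split /=.
have hS : (\sum_(k in N) (p k)%:E * nu k (S k) =
    \sum_(k in [set k in N | (tnth (mu k) i <= th)%R]) (p k)%:E * nu k [set x | leaf_of tl x != k] +
    \sum_(k in [set k in N | (th < tnth (mu k) i)%R]) (p k)%:E * nu k [set x | leaf_of tr x != k])%E.
  rewrite (bigID (fun k => tnth (mu k) i <= th)) /=; congr (_ + _)%E; apply: eq_big.
  - by move=> k; rewrite !inE.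
  - by move=> k /andP[_ h]; rewrite /S h.
  - by move=> k; rewrite !inE ltNge.
  - by move=> k /andP[_ h]; rewrite /S (negbTE h).
rewrite hS.
have hn := node_bound cheb N i th N1 hax adm hmin.
apply: le_trans (leeD hn (leeD IHl IHr)) _.
rewrite -!EFinD lee_fin.
set L := [set k in N | tnth (mu k) i <= th].
set Rr := [set k in N | th < tnth (mu k) i].
have cN : #|N| = (#|L| + #|Rr|)%N.
  rewrite -!sum1_card (bigID (fun k => tnth (mu k) i <= th)) /=; congr (_ + _)%N;
  by apply: eq_bigl => k; rewrite !inE ?ltNge.
have a1 : 1 <= #|L|%:R :> R.
  case: adm => -[k kN hk] _; rewrite (ler_nat R 1); apply/card_gt0P; exists k.
  by rewrite !inE kN ltW.
have b1 : 1 <= #|Rr|%:R :> R.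
  case: adm => _ [k kN hk]; rewrite (ler_nat R 1); apply/card_gt0P; exists k.
  by rewrite !inE kN.
rewrite cN natrD; exact: arith.
Qed.
End Main.

Theorem theorem7 (R : realType) (K d : nat)
  (p : 'I_K -> R) (mu : 'I_K -> d.-tuple R) (sigma : 'I_d -> R)
  (nu : 'I_K -> probability (d.-tuple R) R) (alpha beta q : R)
  (* mixture weights *)
  (hp0 : forall k, 0 <= p k) (hp1 : \sum_(k < K) p k = 1)
  (halpha : 1 <= alpha) (hpa : forall k, p k <= alpha / K%:R)
  (* each component: discrete or absolutely continuous, symmetric about its mean *)
  (hdc : forall k, discrete_law (nu k) \/ abs_continuous_law (nu k))
  (hsym : forall k, symmetric_about (nu k) (mu k))
  (* means and shared finite coordinate-wise variances *)
  (hsig : forall j, 0 < sigma j)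
  (hL2 : forall k j, xcoord j \in Lfun (nu k) 2%:E)
  (hmean : forall k j, ('E_(nu k)[xcoord j] = (tnth (mu k) j)%:E)%E)
  (hvar : forall k j, variance (nu k) (xcoord j) = (sigma j ^+ 2)%:E)
  (* beta-condition *)
  (hbeta : forall i : 'I_d,
     (sqrte (mix_expect p nu (fun k x => ((xcoord i x - tnth (mu k) i) ^+ 2)%R))
      <= beta%:E * mix_expect p nu (fun k x => (`|xcoord i x - tnth (mu k) i|)%R))%E)
  (* q = ENR(nu) > 0 *)
  (hq : ENR mu sigma = q%:E) (hq0 : 0 < q)
  (* any output tree of the MMDT algorithm (either threshold rule) *)
  (cheb : bool) (t : @dtree R K d)
  (ht : mmdt_run p mu sigma nu cheb [set: 'I_K] t) :
  (mix_prob p nu (fun k => [set x | mu (leaf_of t x) <> mu k])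
   <= ((4 + 2 * pi ^+ 2 / 3) * alpha * K%:R * (K%:R - 1) / q)%:E)%E.

Proof.
have K0 : (0 < K)%N.
  rewrite lt0n; apply/negP => /eqP K0.
  have : \sum_(k < K) p k = 0 by apply: big1 => -[k hk]; exfalso; move: hk; rewrite K0.
  by rewrite hp1 => /eqP; rewrite oner_eq0.
have KR : K%:R != 0 :> R by rewrite pnatr_eq0 -lt0n.
set C := 4 + 2 * pi ^+ 2 / 3.
have hC : 20/3 <= C by have := pi_ge2 R; rewrite /C; nra.
have hF : 0 <= alpha / K%:R / q by apply: divr_ge0; [apply: divr_ge0; [lra | exact: ler0n] | exact: ltW].
have hT := tree_bound _ _ _ _ _ _ _ _ _ hp0 hpa hsym hsig hmean hvar hq hq0 C cheb _ t hC hF ht.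
rewrite /mix_prob; apply: le_trans (le_trans _ hT) _.
  rewrite [X in (_ <= X)%E](eq_bigl xpredT); last by move=> k; rewrite !inE.
  apply: lee_sum => k _; apply: lee_wpmul2l; first by rewrite lee_fin.
  apply: le_measure; rewrite ?inE.
  - rewrite (_ : [set x | _] = [set x | mu (leaf_of t x) != mu k]).
      exact: (@mleaf R K d t (fun l => mu l != mu k)).
    by apply/seteqP; split => x /= /eqP.
  - exact: (@mleaf R K d t (fun l => l != k)).
  by move=> x /= h; apply/eqP => e; apply: h; rewrite e.
rewrite lee_fin cardsT card_ord le_eqVlt; apply/orP; left; apply/eqP.
by field; rewrite KR gt_eqF.
Qed.
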